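(* Let $p$ be a prime, $n$ a positive integer, $s\ge 0$ an integer, and $d$ a positive integer with $\gcd(d,p^n-1)=1$. Let $F:\mathbb{F}_{p^n}\to\mathbb{F}_{p^n}$, $F(x)=x^d$. Suppose the cross-correlation function $\theta(\tau)$, $0\le\tau\le p^n-2$, of the $p$-ary $m$-sequences $u$ and $v$ that differ by decimation $d$ takes exactly the three values $-1$, $-1+p^{(n+s)/2}$ and $-1-p^{(n+s)/2}$. Then $F$ is a vectorial $s$-plateaued function, i.e. $|\widehat{F_b}(a)|\in\{0,p^{(n+s)/2}\}$ for all $b\in\mathbb{F}_{p^n}^*$ and $a\in\mathbb{F}_{p^n}$.
   Context: $\zeta_p=e^{2\pi i/p}$, $Tr_n(z)=\sum_{i=0}^{n-1}z^{p^i}$. Let $\sigma$ be a primitive element of $\mathbb{F}_{p^n}$; the $m$-sequence is $u(t)=Tr_n(\sigma^t)$ and its decimation is $v(t)=u(dt)$; the cross-correlation is $\theta(\tau)=\sum_{t=0}^{p^n-2}\zeta_p^{u(t+\tau)-v(t)}$. For $b\in\mathbb{F}_{p^n}^*$, $F_b(x)=Tr_n(bF(x))$ and $\widehat{F_b}(a)=\sum_{x\in\mathbb{F}_{p^n}}\zeta_p^{F_b(x)-Tr_n(ax)}$. *)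

(* Defs.v *)
From mathcomp Require Import all_boot all_order all_algebra all_field.
Set Implicit Arguments. Unset Strict Implicit. Unset Printing Implicit Defensive.
Import Order.TTheory GRing.Theory Num.Theory.
Local Open Scope ring_scope.

(* zeta_p = e^{2 pi i / p} in algC: p.-root (-1) is the p-th root of -1 with
   minimal nonnegative argument, i.e. e^{i pi/p}; its square is e^{2 pi i/p}. *)
Definition zeta (p : nat) : algC := (p.-root (-1)) ^+ 2.

Definition Tr {F : finFieldType} (p n : nat) (z : F) : F :=
  \sum_(i < n) z ^+ (p ^ i).

Definition fp_idx {F : finFieldType} (p : nat) (y : F) : nat :=
  odflt 0%N (omap (@nat_of_ord p) [pick k : 'I_p | (k%:R : F) == y]).

Definition chi {F : finFieldType} (p : nat) (y : F) : algC :=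
  zeta p ^+ fp_idx p y.

(* cross-correlation theta(tau) of u(t) = Tr(sigma^t) and v(t) = u(d t) *)
Definition theta {F : finFieldType} (p n d : nat) (sigma : F) (tau : nat) : algC :=
  \sum_(t < p ^ n - 1) chi p (Tr p n (sigma ^+ (t + tau)) - Tr p n (sigma ^+ (d * t))).

Definition walsh {F : finFieldType} (p n d : nat) (b a : F) : algC :=
  \sum_(x : F) chi p (Tr p n (b * x ^+ d) - Tr p n (a * x)).

(* Main.v *)
Require Import Defs.
From mathcomp Require Import all_boot all_order all_algebra all_field.
From mathcomp Require Import zify.
Set Implicit Arguments. Unset Strict Implicit. Unset Printing Implicit Defensive.
Import Order.TTheory GRing.Theory Num.Theory.
Local Open Scope ring_scope.

Section Fp.
Variables (F : finFieldType) (p : nat).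
Hypothesis pF : p \in [pchar F].

Let pr : prime p := pcharf_prime pF.
Let p_gt0 : (0 < p)%N := prime_gt0 pr.
Let p_gt1 : (1 < p)%N := prime_gt1 pr.

Lemma natF_inj k l : (k < p)%N -> (l < p)%N -> (k%:R : F) = l%:R -> k = l.
Proof.
wlog kl : k l / (k <= l)%N.
  move=> W kp lp E; case: (leqP k l) => h; first exact: W.
  by apply/esym/W => //; apply: ltnW.
move=> kp lp E.
have : ((l - k)%:R : F) == 0 by rewrite natrB // E subrr.
rewrite -(dvdn_pcharf pF); case: (posnP (l - k)) => [|h /(dvdn_leq h)]; lia.
Qed.

Lemma fp_idx_nat k : (k < p)%N -> fp_idx p (k%:R : F) = k.
Proof.
move=> kp; rewrite /fp_idx; case: pickP => [k' /eqP E|/(_ (Ordinal kp))].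
  by rewrite /=; apply: natF_inj => //; exact: ltn_ord.
by rewrite /= eqxx.
Qed.

Lemma zeta_p : zeta p ^+ p = 1.
Proof. by rewrite /zeta -exprM mulnC exprM rootCK // sqrrN expr1n. Qed.

Lemma chi_nat m : chi p (m%:R : F) = zeta p ^+ m.
Proof.
by rewrite /chi -(GRing.natr_mod_pchar pF) fp_idx_nat ?ltn_mod // (expr_mod _ zeta_p).
Qed.

Lemma frob_fixed (y : F) : y ^+ p = y -> exists m, y = m%:R.
Proof.
move=> yp; case: (pickP (fun i : 'I_p => y == i%:R)) => [i /eqP ->|hy0].
  by exists i.
have hy i : (i < p)%N -> y <> i%:R by move=> ip /eqP; rewrite (hy0 (Ordinal ip)).
pose rs := y :: [seq (i%:R : F) | i <- iota 0 p].
pose P : {poly F} := 'X^p - 'X.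
have szP : size P = p.+1.
  by rewrite /P size_addl ?size_polyXn // size_polyN size_polyX.
have P0 : P != 0 by rewrite -size_poly_eq0 szP.
have := max_poly_roots P0.
rewrite szP => /(_ rs) /=; rewrite size_map size_iota ltnn.
have H1 : all (root P) rs.
  apply/allP => x; rewrite inE => /orP[/eqP->|/mapP[i _ ->]];
  rewrite /root !hornerE ?yp ?subrr //.
  by rewrite -(pFrobenius_autE pF) pFrobenius_aut_nat subrr.
have H2 : uniq rs.
  rewrite /= map_inj_in_uniq ?iota_uniq ?andbT.
    by apply/mapP => [[i]]; rewrite mem_iota add0n => /= /hy.
  by move=> i j; rewrite !mem_iota /= !add0n => ip jp; apply: natF_inj.
by move=> /(_ H1 H2).
Qed.


Variable n : nat.
Hypothesis n_gt0 : (0 < n)%N.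
Hypothesis cardF : #|F| = (p ^ n)%N.

Lemma Tr_add (y z : F) : Tr p n (y + z) = Tr p n y + Tr p n z.
Proof.
rewrite /Tr -big_split; apply: eq_bigr => i _; apply: exprDn_pchar.
by rewrite (eq_pnat _ (GRing.pcharf_eq pF)) pnatX pnat_id.
Qed.

Lemma Tr0 : Tr p n (0 : F) = 0.
Proof. by rewrite /Tr big1 // => i _; rewrite expr0n expn_eq0 eqn0Ngt p_gt0. Qed.

Lemma Tr_Mn (y : F) j : Tr p n (y *+ j) = Tr p n y *+ j.
Proof. by elim: j => [|j IH]; rewrite ?mulr0n ?Tr0 // !mulrS Tr_add IH. Qed.

Lemma Tr_frob (y : F) : Tr p n y ^+ p = Tr p n y.
Proof.
rewrite -(pFrobenius_autE pF) /Tr rmorph_sum /=.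
under eq_bigr => i _ do rewrite pFrobenius_autE -exprM -expnSr.
case: n n_gt0 cardF => // n' _ cF.
rewrite big_ord_recr big_ord_recl /= -cF expf_card expn0 expr1 addrC.
by congr (_ + _); apply: eq_bigr => i _.
Qed.

Lemma Tr_nat (y : F) : exists m, Tr p n y = m%:R.
Proof. exact/frob_fixed/Tr_frob. Qed.


Lemma Tr_nz : exists y : F, Tr p n y != 0.
Proof.
case: n n_gt0 cardF => // n' _ cF.
case: (pickP (fun y : F => Tr p n'.+1 y != 0)) => [y hy|hy0]; first by exists y.
pose P : {poly F} := \sum_(i < n'.+1) 'X^(p ^ i).
have PE y : P.[y] = Tr p n'.+1 y by rewrite /P horner_sum; apply: eq_bigr => i _; rewrite hornerXn.
have cP : P`_(p ^ n') = 1.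
  rewrite /P coef_sum big_ord_recr /= coefXn eqxx big1 ?add0r // => i _.
  by rewrite coefXn eqn_exp2l // eqn_leq leqNgt ltn_ord.
have P0 : P != 0 by apply/eqP => P0; move: cP; rewrite P0 coef0 => /eqP; rewrite eq_sym oner_eq0.
have szP : (size P <= (p ^ n').+1)%N.
  apply: leq_trans (size_sum _ _ _) _; apply/bigmax_leqP => i _.
  by rewrite size_polyXn ltnS leq_pexp2l // -ltnS ltn_ord.
have := max_poly_roots P0 (_ : all (root P) (enum F)) (enum_uniq F).
rewrite -cardE cF => /(_ _).
have H : all (root P) (enum F).
  by apply/allP => y _; rewrite /root PE; move: (hy0 y) => /= /negbFE.
move=> /(_ H) /leq_trans /(_ szP); rewrite ltnS expnS.
have : (0 < p ^ n')%N by rewrite expn_gt0 p_gt0.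
nia.
Qed.

Lemma Tr_one : exists y : F, Tr p n y = 1.
Proof.
have [y0 hy0] := Tr_nz; have [k hk] := Tr_nat y0.
move: hy0; rewrite hk -(dvdn_pcharf pF) => ndk.
have k0 : (0 < k)%N by case: k hk ndk => //; rewrite dvdn0.
case: (egcdnP p k0) => km kn E _.
have g1 : gcdn k p = 1%N by apply/eqP; rewrite -/(coprime k p) coprime_sym prime_coprime.
exists (y0 *+ km); rewrite Tr_Mn hk -mulrnA mulnC E g1 natrD natrM (GRing.pcharf0 pF).
by rewrite mulr0 add0r.
Qed.


Lemma zeta_norm : `|zeta p| = 1.
Proof.
apply/eqP; rewrite -(pexpr_eq1 p_gt0) // -normrX zeta_p normr1 //.
Qed.

Lemma zeta_conj : (zeta p)^* = zeta p ^+ p.-1.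
Proof.
have z0 : zeta p != 0 by apply/eqP => z0; move: zeta_p; rewrite z0 expr0n gtn_eqF // => /eqP; rewrite eq_sym oner_eq0.
apply: (mulfI z0); rewrite -exprS prednK // zeta_p -normCK zeta_norm expr1n //.
Qed.

Lemma chi_Tr_sub (y z : F) : chi p (Tr p n y - Tr p n z) = chi p (Tr p n y) * (chi p (Tr p n z))^*.
Proof.
have [a ->] := Tr_nat y; have [b ->] := Tr_nat z.
have -> : - (b%:R : F) = ((p.-1 * b)%:R).
  apply/eqP; rewrite eq_sym -subr_eq0 opprK -natrD.
  have -> : (p.-1 * b + b = p * b)%N by rewrite -{2}(prednK p_gt0) mulSn addnC.
  by rewrite natrM (GRing.pcharf0 pF) mul0r.
rewrite -natrD !chi_nat exprD rmorphXn /=.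
by rewrite exprM zeta_conj.
Qed.

Lemma chi_Tr0 : chi p (Tr p n (0 : F)) = 1.
Proof. by rewrite Tr0 -(mulr0n 1) chi_nat expr0. Qed.

Lemma chi_Tr_shift (y y1 : F) : Tr p n y1 = 1 -> chi p (Tr p n (y1 + y)) = zeta p * chi p (Tr p n y).
Proof.
move=> t1; have [a ha] := Tr_nat y.
by rewrite Tr_add t1 ha -(natrD _ 1) chi_nat chi_nat exprD expr1 mulrC.
Qed.

Lemma chi_Tr_zeta1 (y : F) : zeta p = 1 -> chi p (Tr p n y) = 1.
Proof. by move=> z1; have [a ->] := Tr_nat y; rewrite chi_nat z1 expr1n. Qed.

End Fp.

Theorem mainTheorem3 (F : finFieldType) (p n s d : nat) (sigma : F) :
  prime p -> p \in [pchar F] -> (0 < n)%N -> #|F| = (p ^ n)%N ->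
  (0 < d)%N -> coprime d (p ^ n - 1) ->
  (p ^ n - 1).-primitive_root sigma ->
  (forall tau : nat, (tau < p ^ n - 1)%N ->
     theta p n d sigma tau \in
       [:: -1; -1 + sqrtC ((p ^ (n + s))%:R); -1 - sqrtC ((p ^ (n + s))%:R)]) ->
  (exists2 tau, (tau < p ^ n - 1)%N & theta p n d sigma tau = -1) ->
  (exists2 tau, (tau < p ^ n - 1)%N &
     theta p n d sigma tau = -1 + sqrtC ((p ^ (n + s))%:R)) ->
  (exists2 tau, (tau < p ^ n - 1)%N &
     theta p n d sigma tau = -1 - sqrtC ((p ^ (n + s))%:R)) ->
  forall b a : F, b != 0 ->
    `|walsh p n d b a| \in [:: 0; sqrtC ((p ^ (n + s))%:R)].
Proof.
move=> pr pF n0 cF d0 cop prim Hth [t0 t0lt th0] _ _ b a b0.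
set N := (p ^ n - 1)%N in cop prim Hth t0lt th0 *.
set sP := sqrtC ((p ^ (n + s))%:R) in Hth *.
have p1 : (1 < p)%N := prime_gt1 pr.
have pn1 : (1 < p ^ n)%N by rewrite -{1}(expn0 p) ltn_exp2l.
have N0 : (0 < N)%N by rewrite /N subn_gt0.
have cF' : #|F| = N.+1 by rewrite cF /N subn1 prednK // ltnW.
have powN x : x ^+ N.+1 = x :> F by rewrite -cF' expf_card.
have powk (x : F) k : x ^+ (k * N + 1) = x.
  case: (eqVneq x 0) => [->|x0]; first by rewrite expr0n addn1.
  have xN : x ^+ N = 1 by apply: (mulIf x0); rewrite mul1r -exprSr powN.
  by rewrite exprD mulnC exprM xN expr1n mul1r expr1.
case: (egcdnP N d0) => km kn E _; rewrite (eqP cop) in E.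
have dK (x : F) : (x ^+ d) ^+ km = x by rewrite -exprM mulnC E powk.
have Kd (x : F) : (x ^+ km) ^+ d = x by rewrite -exprM E powk.
have dinj : injective (fun x : F => x ^+ d) := can_inj (g := fun x => x ^+ km) dK.
pose psi (y : F) := chi p (Tr p n y).
pose G (c : F) := \sum_(x : F) psi (c * x) * (psi (x ^+ d))^*.
pose h (t : 'I_N) := sigma ^+ t.
have hinj : injective h.
  move=> i j /eqP; rewrite /h (eq_prim_root_expr prim) !modn_small ?ltn_ord //.
  by move=> /eqP; apply: val_inj.
have sigma0 : sigma != 0.
  apply/eqP => s0; move: (prim_expr_order prim); rewrite s0 expr0n gtn_eqF //.
  by move=> /eqP; rewrite eq_sym oner_eq0.
have himg : h @: setT = [set~ 0].
  apply/eqP; rewrite eqEcard; apply/andP; split.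
    apply/subsetP => _ /imsetP[t _ ->]; rewrite !inE /h expf_eq0 (negbTE sigma0) andbF //.
  by rewrite cardsC1 card_imset // cardsT card_ord cF'.
have Gth t : (t < N)%N -> G (sigma ^+ t) = 1 + theta p n d sigma t.
  move=> tN; rewrite /G (bigD1 0) //= mulr0 expr0n gtn_eqF // /psi chi_Tr0 // rmorph1 mulr1.
  congr (_ + _).
  rewrite (eq_bigl (fun x => x \in [set~ (0 : F)])); last by move=> x; rewrite !inE.
  rewrite -himg big_imset /=; last exact: in2W.
  rewrite /theta; apply: eq_big => [i|i _]; first by rewrite inE.
  by rewrite chi_Tr_sub // /h -exprD addnC -exprM mulnC.
have Gval c : c != 0 -> `|G c| \in [:: 0; sP].
  move=> c0; have : c \in h @: setT by rewrite himg !inE.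
  case/imsetP => t _ ->; rewrite /h Gth ?ltn_ord //.
  have sP0 : 0 <= sP by rewrite sqrtC_ge0 ler0n.
  move: (Hth t (ltn_ord t)); rewrite !inE => /or3P [] /eqP ->.
  - by rewrite subrr normr0 eqxx.
  - by rewrite addrA subrr add0r ger0_norm // eqxx orbT.
  - by rewrite addrA subrr add0r normrN ger0_norm // eqxx orbT.
have z1 : zeta p != 1.
  apply/eqP => z1; move: th0; rewrite /theta.
  under eq_bigr => i _ do rewrite chi_Tr_sub // !chi_Tr_zeta1 // rmorph1 mulr1.
  rewrite sumr_const card_ord => /eqP; rewrite -subr_eq0 opprK -mulrSr pnatr_eq0 //.
case: (eqVneq a 0) => [->|a0].
  have S0 : \sum_(y : F) psi y = 0.
    have [y1 t1] := Tr_one pF n0 cF.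
    have : \sum_(y : F) psi y = zeta p * \sum_(y : F) psi y.
      rewrite {1}(reindex_inj (addrI y1)) /= mulr_sumr; apply: eq_bigr => y _.
      exact: chi_Tr_shift.
    move/eqP; rewrite -subr_eq0 -{1}(mul1r (\sum_(y : F) _)) -mulrBl mulf_eq0 subr_eq0.
    by rewrite eq_sym (negbTE z1) /= => /eqP.
  have hb : injective (fun x => b * x ^+ d) by move=> x y /(mulfI b0) /dinj.
  rewrite (reindex_inj hb) /= in S0.
  rewrite /walsh (eq_bigr (fun x => psi (b * x ^+ d))); last first.
    by move=> x _; rewrite mul0r chi_Tr_sub // chi_Tr0 // rmorph1 mulr1.
  by rewrite S0 normr0 inE eqxx.
pose lam := (b^-1) ^+ km.
have lam0 : lam != 0 by rewrite expf_neq0 // invr_neq0.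
have bl : b * lam ^+ d = 1 by rewrite Kd mulfV.
have cW : (walsh p n d b a)^* = G (a * lam).
  rewrite /walsh rmorph_sum (reindex_inj (mulfI lam0)) /G; apply: eq_bigr => y _.
  rewrite chi_Tr_sub // rmorphM /= exprMn mulrA bl mul1r mulrC mulrA.
  by congr (_ * _); exact: conjCK.
by rewrite -norm_conjC cW; apply: Gval; rewrite mulf_neq0.
Qed.
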